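(* Let $\mathcal G$ be a real Lie algebra that is nilpotent of step at most $3$, i.e. $[\mathcal G,[\mathcal G,[\mathcal G,\mathcal G]]]=0$. Then there exist a linear endomorphism $f$ of $\mathcal G$ with $f([x,y])-[f(x),f(y)]\in\mathcal Z(\mathcal G)$ for all $x,y$, and an invertible linear endomorphism $d$ of $\mathcal G$ with $d[x,y]=[dx,fy]+[fx,dy]$ for all $x,y$, such that the product $xy:=d^{-1}[fx,dy]$ is left symmetric and compatible with the bracket, i.e. $(xy)z-x(yz)=(yx)z-y(xz)$ and $xy-yx=[x,y]$ for all $x,y,z$. Consequently every connected Lie group with Lie algebra $\mathcal G$ carries a flat torsion-free left invariant affine connection $\nabla$ with $\nabla_{x^+}y^+=(xy)^+$.
   Context: $\mathcal Z(\mathcal G)$ denotes the center of $\mathcal G$; $x^+$ is the left invariant vector field with value $x$ at the unit. *)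

(* Defs.v *)
From HB Require Import structures.
From mathcomp Require Import all_boot all_order all_algebra.
Set Implicit Arguments. Unset Strict Implicit. Unset Printing Implicit Defensive.
Import Order.TTheory GRing.Theory Num.Theory.
Local Open Scope ring_scope.

Definition is_lie_bracket (R : fieldType) (V : vectType R) (br : V -> V -> V) : Prop :=
  [/\ (forall x : V, linear (br x)),
      (forall y : V, linear (fun x => br x y)),
      (forall x : V, br x x = 0) &
      (forall x y z : V, br x (br y z) + br y (br z x) + br z (br x y) = 0)].

Definition nilpotent_step3 (R : fieldType) (V : vectType R) (br : V -> V -> V) : Prop :=
  forall x y z w : V, br x (br y (br z w)) = 0.

Definition in_center (R : fieldType) (V : vectType R) (br : V -> V -> V) (z : V) : Prop :=
  forall x : V, br x z = 0.

(* Main.v *)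
Require Import Defs.
From HB Require Import structures.
From mathcomp Require Import all_boot all_order all_algebra.
From mathcomp Require Import ring.
Import Order.TTheory GRing.Theory Num.Theory.
Set Implicit Arguments. Unset Strict Implicit.
Local Open Scope ring_scope.

Lemma linD (R : fieldType) (V : vectType R) (g : V -> V) (hg : linear g) u v :
  g (u + v) = g u + g v.
Proof. by have := hg 1 u v; rewrite !scale1r. Qed.

Lemma lin0 (R : fieldType) (V : vectType R) (g : V -> V) (hg : linear g) :
  g 0 = 0.
Proof.
have h := linD hg 0 0; rewrite addr0 in h.
by apply: (addrI (g 0)); rewrite -h addr0.
Qed.

Lemma linZ (R : fieldType) (V : vectType R) (g : V -> V) (hg : linear g) a u :
  g (a *: u) = a *: g u.
Proof. by have := hg a u 0; rewrite !addr0 lin0 // addr0. Qed.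

Lemma linN (R : fieldType) (V : vectType R) (g : V -> V) (hg : linear g) u :
  g (- u) = - g u.
Proof. by rewrite -scaleN1r linZ // scaleN1r. Qed.

Lemma linB (R : fieldType) (V : vectType R) (g : V -> V) (hg : linear g) u v :
  g (u - v) = g u - g v.
Proof. by rewrite linD // linN. Qed.

Lemma linS (R : fieldType) (V : vectType R) (g : V -> V) (hg : linear g) n
  (F : 'I_n -> V) : g (\sum_(i < n) F i) = \sum_(i < n) g (F i).
Proof.
elim: n F => [|n IH] F; first by rewrite !big_ord0 lin0.
by rewrite !big_ord_recr /= linD // IH.
Qed.

Definition C2 (R : fieldType) (V : vectType R) (br : V -> V -> V) : {vspace V} :=
  (\sum_(i < \dim {:V}) \sum_(j < \dim {:V})
     <[br (vbasis {:V})`_i (vbasis {:V})`_j]>)%VS.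

Lemma memC2 (R : fieldType) (V : vectType R) (br : V -> V -> V)
  (hLie : is_lie_bracket br) x y : br x y \in C2 br.
Proof.
case: hLie => h1 h2 _ _.
rewrite (coord_vbasis (memvf x)) (linS (h2 y)).
apply: memv_sumr => i _; rewrite (linZ (h2 y)); apply: memvZ.
rewrite (coord_vbasis (memvf y)) (linS (h1 _)).
apply: memv_sumr => j _; rewrite (linZ (h1 _)); apply: memvZ.
exact: memv_line.
Qed.

Lemma C2_ind (R : fieldType) (V : vectType R) (br : V -> V -> V)
  (g : V -> V) (hg : linear g) (h : forall a b, g (br a b) = 0) c :
  c \in C2 br -> g c = 0.
Proof.
move=> /memv_sumP [vs Hvs ->]; rewrite linS // big1 // => i _.
have /memv_sumP [ws Hws ->] := Hvs i isT; rewrite linS // big1 // => j _.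
by have /vlineP [k ->] := Hws j isT; rewrite linZ // h scaler0.
Qed.

Definition lc3 (R : fieldType) (V : vectType R) (U : V * V * V) (a b c : R) : V :=
  a *: U.1.1 + b *: U.1.2 + c *: U.2.

Lemma lc3D (R : fieldType) (V : vectType R) (U : V * V * V) a b c a' b' c' :
  lc3 U a b c + lc3 U a' b' c' = lc3 U (a + a') (b + b') (c + c').
Proof.
rewrite /lc3 !scalerDl.
by rewrite [LHS]addrACA [X in X + _ = _]addrACA.
Qed.

Lemma lc3Z (R : fieldType) (V : vectType R) (U : V * V * V) k a b c :
  k *: lc3 U a b c = lc3 U (k * a) (k * b) (k * c).
Proof. by rewrite /lc3 !scalerDr !scalerA. Qed.

Lemma lc3N (R : fieldType) (V : vectType R) (U : V * V * V) a b c :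
  - lc3 U a b c = lc3 U (- a) (- b) (- c).
Proof. by rewrite -scaleN1r lc3Z !mulN1r. Qed.

Lemma lc3B (R : fieldType) (V : vectType R) (U : V * V * V) a b c a' b' c' :
  lc3 U a b c - lc3 U a' b' c' = lc3 U (a - a') (b - b') (c - c').
Proof. by rewrite lc3N lc3D. Qed.

Lemma lc30 (R : fieldType) (V : vectType R) (U : V * V * V) :
  0 = lc3 U 0 0 0.
Proof. by rewrite /lc3 !scale0r !addr0. Qed.

Lemma lc3_1 (R : fieldType) (V : vectType R) (u v w : V) :
  u = lc3 (u, v, w) 1 0 0.
Proof. by rewrite /lc3 /= scale1r !scale0r !addr0. Qed.
Lemma lc3_2 (R : fieldType) (V : vectType R) (u v w : V) :
  v = lc3 (u, v, w) 0 1 0.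
Proof. by rewrite /lc3 /= scale1r !scale0r add0r addr0. Qed.
Lemma lc3_3 (R : fieldType) (V : vectType R) (u v w : V) :
  w = lc3 (u, v, w) 0 0 1.
Proof. by rewrite /lc3 /= scale1r !scale0r !add0r. Qed.


Lemma brDl (R : fieldType) (V : vectType R) (br : V -> V -> V)
  (hLie : is_lie_bracket br) u v w : br (u + v) w = br u w + br v w.
Proof. by case: hLie => _ h2 _ _; rewrite (linD (h2 w)). Qed.
Lemma brDr (R : fieldType) (V : vectType R) (br : V -> V -> V)
  (hLie : is_lie_bracket br) u v w : br w (u + v) = br w u + br w v.
Proof. by case: hLie => h1 _ _ _; rewrite (linD (h1 w)). Qed.
Lemma brZl (R : fieldType) (V : vectType R) (br : V -> V -> V)
  (hLie : is_lie_bracket br) a u w : br (a *: u) w = a *: br u w.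
Proof. by case: hLie => _ h2 _ _; rewrite (linZ (h2 w)). Qed.
Lemma brZr (R : fieldType) (V : vectType R) (br : V -> V -> V)
  (hLie : is_lie_bracket br) a u w : br w (a *: u) = a *: br w u.
Proof. by case: hLie => h1 _ _ _; rewrite (linZ (h1 w)). Qed.

Lemma brA (R : fieldType) (V : vectType R) (br : V -> V -> V)
  (hLie : is_lie_bracket br) u v : br u v = - br v u.
Proof.
have := hLie; case=> _ _ h3 _.
have := h3 (u + v); rewrite (brDl hLie) !(brDr hLie) !h3 add0r addr0.
by move/eqP; rewrite addr_eq0 => /eqP.
Qed.

Lemma brNr (R : fieldType) (V : vectType R) (br : V -> V -> V)
  (hLie : is_lie_bracket br) u w : br w (- u) = - br w u.
Proof. by rewrite -scaleN1r (brZr hLie) scaleN1r. Qed.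
Lemma brNl (R : fieldType) (V : vectType R) (br : V -> V -> V)
  (hLie : is_lie_bracket br) u w : br (- u) w = - br u w.
Proof. by rewrite -scaleN1r (brZl hLie) scaleN1r. Qed.

Lemma jac2 (R : fieldType) (V : vectType R) (br : V -> V -> V)
  (hLie : is_lie_bracket br) u v w :
  br (br u v) w = br u (br v w) - br v (br u w).
Proof.
have := hLie; case=> _ _ _ h4.
have := h4 u v w; rewrite (brA hLie w (br u v)) (brA hLie w u) (brNr hLie).
by move/eqP; rewrite subr_eq0 => /eqP ->.
Qed.

Lemma cent3 (R : fieldType) (V : vectType R) (br : V -> V -> V)
  (hLie : is_lie_bracket br) (hnil : nilpotent_step3 br) z x c :
  c \in C2 br -> br z (br x c) = 0.
Proof.
apply: (C2_ind (g := fun c => br z (br x c))); last by move=> a b; apply: hnil.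
by move=> a s t /=; rewrite (brDr hLie) (brZr hLie) (brDr hLie) (brZr hLie).
Qed.

Lemma c2c2a (R : fieldType) (V : vectType R) (br : V -> V -> V)
  (hLie : is_lie_bracket br) (hnil : nilpotent_step3 br) a b c :
  c \in C2 br -> br (br a b) c = 0.
Proof.
apply: (C2_ind (g := fun c => br (br a b) c)).
  by move=> k s t /=; rewrite (brDr hLie) (brZr hLie).
move=> a' b'; rewrite (brA hLie) (jac2 hLie) !hnil subrr oppr0 //.
Qed.

Lemma c2c2 (R : fieldType) (V : vectType R) (br : V -> V -> V)
  (hLie : is_lie_bracket br) (hnil : nilpotent_step3 br) c c' :
  c \in C2 br -> c' \in C2 br -> br c c' = 0.
Proof.
move=> Hc Hc'; move: c Hc.
apply: (C2_ind (g := fun c => br c c')).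
  by move=> k s t /=; rewrite (brDl hLie) (brZl hLie).
by move=> a b; apply: c2c2a.
Qed.

Lemma br0r (R : fieldType) (V : vectType R) (br : V -> V -> V)
  (hLie : is_lie_bracket br) w : br w 0 = 0.
Proof. by case: hLie => h1 _ _ _; exact: (lin0 (h1 w)). Qed.

Unset Implicit Arguments.
Set Strict Implicit.
Ltac lcpush := rewrite ?(lc3Z, lc3N, lc3B, lc3D); congr (lc3 _ _ _ _).

Theorem mainTheorem16 (R : rcfType) (V : vectType R) (br : V -> V -> V)
    (hLie : is_lie_bracket br) (hnil : nilpotent_step3 br) :
  exists (f d dinv : 'End(V)),
    [/\ (forall x y : V, in_center br (f (br x y) - br (f x) (f y))),
        cancel d dinv, cancel dinv d,
        (forall x y : V, d (br x y) = br (d x) (f y) + br (f x) (d y)) &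
        let prod := fun x y : V => dinv (br (f x) (d y)) in
        (forall x y z : V,
            prod (prod x y) z - prod x (prod y z)
          = prod (prod y x) z - prod y (prod x z)) /\
        (forall x y : V, prod x y - prod y x = br x y)].
Proof.
pose P := projv (C2 br).
pose f : 'End(V) := (2%:R / 3%:R) *: \1%VF + (- (2%:R / 9%:R)) *: P.
pose d : 'End(V) := \1%VF + (1 / 3%:R) *: P.
pose di : 'End(V) := \1%VF + (- (1 / 4%:R)) *: P.
have fE x : f x = (2%:R / 3%:R) *: x + (- (2%:R / 9%:R)) *: P x.
  by rewrite add_lfunE !scale_lfunE id_lfunE.
have dE x : d x = x + (1 / 3%:R) *: P x.
  by rewrite add_lfunE !scale_lfunE id_lfunE.
have diE x : di x = x + (- (1 / 4%:R)) *: P x.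
  by rewrite add_lfunE !scale_lfunE id_lfunE.
have PP x : P (P x) = P x by rewrite projv_proj.
have Pbr x y : P (br x y) = br x y by rewrite projv_id // memC2.
have PC x : P x \in C2 br by apply: memv_proj.
have dK : cancel d di.
  move=> x; rewrite diE dE linearD linearZ /= PP.
  set p := P x; pose U := (x, 0 : V, p).
  rewrite (lc3_1 x 0 p : x = lc3 U 1 0 0) (lc3_3 x 0 p : p = lc3 U 0 0 1).
  by lcpush; field.
have diK : cancel di d.
  move=> x; rewrite diE dE linearD linearZ /= PP.
  set p := P x; pose U := (x, 0 : V, p).
  rewrite (lc3_1 x 0 p : x = lc3 U 1 0 0) (lc3_3 x 0 p : p = lc3 U 0 0 1).
  by lcpush; field.
have dC x y : d (br x y) = br (d x) (f y) + br (f x) (d y).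
  rewrite !dE !fE Pbr.
  rewrite !(brDl hLie, brDr hLie, brZl hLie, brZr hLie).
  rewrite (c2c2 hLie hnil (PC x) (PC y)).
  set u1 := br x y; set u2 := br x (P y); set u3 := br (P x) y.
  pose U := (u1, u2, u3).
  rewrite (lc3_1 u1 u2 u3 : u1 = lc3 U 1 0 0) (lc3_2 u1 u2 u3 : u2 = lc3 U 0 1 0)
    (lc3_3 u1 u2 u3 : u3 = lc3 U 0 0 1) (lc30 U).
  by lcpush; field.
have fZ x y z : br z (f (br x y) - br (f x) (f y)) = 0.
  rewrite fE Pbr !fE.
  rewrite !(brDl hLie, brDr hLie, brZl hLie, brZr hLie).
  rewrite (c2c2 hLie hnil (PC x) (PC y)) (brA hLie (P x) y).
  rewrite !(brDr hLie, brZr hLie, brNr hLie) (br0r hLie).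
  rewrite (cent3 hLie hnil _ _ (PC y)) (cent3 hLie hnil _ _ (PC x)).
  set u1 := br z (br x y).
  pose U := (u1, 0 : V, 0 : V).
  rewrite (lc3_1 u1 0 0 : u1 = lc3 U 1 0 0) (lc30 U).
  by lcpush; field.
have comp x y : di (br (f x) (d y)) - di (br (f y) (d x)) = br x y.
  by rewrite -linearB /= (brA hLie (f y)) opprK addrC -dC dK.
exists f, d, di; split; [ | exact: dK | exact: diK | exact: dC | ].
  by move=> x y z; apply: fZ.
move=> prod; split; last exact: comp.
move=> x y z; rewrite /prod !diK.
set a := di (br (f x) (d y)); set b := di (br (f y) (d x)); set w := d z.
have ab : a = b + br x y by rewrite -(comp x y) addrC subrK.
have cen : br (f (br x y)) w = br (br (f x) (f y)) w.
  have h := fZ x y w; rewrite (brDr hLie) (brNr hLie) in h.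
  move/eqP: h; rewrite subr_eq0 => /eqP h.
  by rewrite (brA hLie (f (br x y)) w) h -(brA hLie).
rewrite -!linearB; congr (di _).
rewrite ab linearD (brDl hLie) cen (jac2 hLie).
set u1 := br (f b) w; set u2 := br (f x) (br (f y) w); set u3 := br (f y) (br (f x) w).
pose U := (u1, u2, u3).
rewrite (lc3_1 u1 u2 u3 : u1 = lc3 U 1 0 0) (lc3_2 u1 u2 u3 : u2 = lc3 U 0 1 0)
  (lc3_3 u1 u2 u3 : u3 = lc3 U 0 0 1).
by lcpush; ring.
Qed.
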